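(* Let $0\leq m\leq M$ be integers, $p\in(0,1)$, and define for $n\in\mathbb{N}$ $$f_{S,d}(n)=2n\sum_{k=m}^{M}\binom{n-1}{k}p^k(1-p)^{n-1-k}$$ (with $f_{S,d}(0)=0$). Then $f_{S,d}$ is non-decreasing on the integers of $\left[0,\frac{m+1}{p}-1\right]$ and non-increasing on the integers of $\left[\frac{M+1}{p}-1,+\infty\right)$.
   Context: Here $S=[m,M]$, $d$ is a distance threshold, and $p=p(d)\in(0,1)$ is the probability that two distinct uniformly random points of the unit torus are at distance at most $d$ (equal to $\pi d^2$ for $d\leq\frac12$). Binomial coefficients follow the convention $\binom{a}{k}=0$ for $k>a\geq0$. The quantity $f_{S,d}(n)$ is the expected order at the next step of the redistributed model when the current order is $n$. *)

(* Defs.v *)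
From mathcomp Require Import all_boot all_order all_algebra.
Set Implicit Arguments. Unset Strict Implicit. Unset Printing Implicit Defensive.
Import Order.TTheory GRing.Theory Num.Theory.
Local Open Scope ring_scope.

(* f_{S,d}(n) = 2n * sum_{k=m}^{M} C(n-1,k) p^k (1-p)^(n-1-k), with f(0) = 0.
   For n >= 1, 'C(n.-1, k) = 0 when k > n-1, matching the paper's convention. *)
Definition f_Sd (R : realFieldType) (m M : nat) (p : R) (n : nat) : R :=
  if n is 0 then 0 else
  2 * n%:R * \sum_(m <= k < M.+1) ('C(n.-1, k))%:R * p ^+ k * (1 - p) ^+ (n.-1 - k).

(* Main.v *)
Require Import Defs.
From mathcomp Require Import all_boot all_order all_algebra.
From mathcomp Require Import ring lra zify.
Import Order.TTheory GRing.Theory Num.Theory.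
Local Open Scope ring_scope.
Set Implicit Arguments. Unset Strict Implicit.

Lemma natS' (R : realFieldType) k : (k.+1)%:R = k%:R + 1 :> R.
Proof. by rewrite mulrSr. Qed.

Section S.
Variable R : realFieldType.
Variable p : R.

Definition bb (n i : nat) : R := ('C(n, i))%:R * p ^+ i * (1 - p) ^+ (n - i).

Lemma bb_ge0 n i : 0 <= p -> p <= 1 -> 0 <= bb n i.
Proof. 
move=> h0 h1; rewrite /bb; apply: mulr_ge0; [apply: mulr_ge0|];
  apply: exprn_ge0 || by []. all: try lra.
Qed.

Lemma bb_pascal n i : bb n.+1 i.+1 = p * bb n i + (1 - p) * bb n i.+1.
Proof. 
rewrite /bb binS natrD subSS.
have [lt|le] := ltnP i n.
  have -> : (n - i = (n - i.+1).+1)%N by lia.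
  rewrite !exprS; ring.
rewrite (bin_small (n:=n) (m:=i.+1)) ?ltnS //.
have -> : (n - i = 0)%N by lia.
rewrite exprS; ring.
Qed.

Lemma bb_step n i : bb n i.+1 * (i.+1)%:R * (1 - p) = bb n i * (n%:R - i%:R) * p.
Proof. 
rewrite /bb.
have [lt|le] := ltnP i n.
  have e : (n - i = (n - i.+1).+1)%N by lia.
  have e2 : (i.+1 * 'C(n, i.+1) = (n - i) * 'C(n, i))%N by rewrite mul_bin_left.
  have e3 : ((i.+1)%:R * ('C(n, i.+1))%:R = (n%:R - i%:R) * ('C(n, i))%:R :> R).
    by rewrite -natrM e2 natrM natrB ?(ltnW lt).
  rewrite e !exprS.
  transitivity ((i.+1)%:R * ('C(n, i.+1))%:R * (p * p ^+ i * ((1 - p) * (1 - p) ^+ (n - i.+1)))).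
    ring.
  rewrite e3; ring.
rewrite (bin_small (n:=n) (m:=i.+1)) ?ltnS //.
case: (ltnP n i) => [lt2|le2].
  by rewrite bin_small // !mul0r.
have -> : i = n by apply/eqP; rewrite eqn_leq le le2.
rewrite subrr; ring.
Qed.
End S.
Section T.
Variable R : realFieldType.
Variables (m M : nat) (p : R).
Definition hh n := \sum_(m <= k < M.+1) (k.+1)%:R * bb p n k.+1.

Lemma f_h n : p != 0 -> f_Sd m M p n = 2 / p * hh n.
Proof. 
move=> p0; rewrite /f_Sd /hh; case: n => [|n].
  rewrite big1 ?mulr0 // => k _; rewrite /bb bin_small // mul0r mul0r mulr0 //.
rewrite !big_distrr /=; apply: eq_bigr => k _.
rewrite /bb subSS.
have e := mul_bin_diag n.+1 k; rewrite /= in e.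
have e' : (n.+1)%:R * ('C(n, k))%:R = (k.+1)%:R * ('C(n.+1, k.+1))%:R :> R by rewrite -!natrM e.
rewrite exprS.
transitivity (2 * ((n.+1)%:R * ('C(n, k))%:R) * p ^+ k * (1 - p) ^+ (n - k)); first ring.
rewrite e'. field. done.
Qed.

Lemma h_step n : hh n.+1 - hh n = p * \sum_(m <= k < M.+1) (k.+1)%:R * (bb p n k - bb p n k.+1).
Proof. 
rewrite /hh -sumrB mulr_sumr; apply: eq_bigr => k _.
rewrite bb_pascal; ring.
Qed.

Lemma term_sign n k : 0 < p -> p < 1 ->
  let d := (k.+1)%:R * (1 - p) * (bb p n k.+1 - bb p n k) in
  d = bb p n k * ((n.+1)%:R * p - (k.+1)%:R).
Proof. 
move=> h0 h1 /=. have := bb_step p n k.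
rewrite !natS' => e. 
transitivity (bb p n k.+1 * (k%:R + 1%:R) * (1 - p) - (k%:R + 1%:R) * (1 - p) * bb p n k).
  ring.
rewrite e; ring.
Qed.

Lemma term_le n k : 0 < p -> p < 1 -> (n.+1)%:R * p <= (k.+1)%:R -> bb p n k.+1 <= bb p n k.
Proof. 
move=> h0 h1 hk; have := term_sign n k h0 h1 => /= e.
have b0 := bb_ge0 n k (ltW h0) (ltW h1).
have : (k.+1)%:R * (1 - p) * (bb p n k.+1 - bb p n k) <= 0.
  rewrite e; apply: mulr_ge0_le0 => //; lra.
have kp : 0 < (k.+1)%:R * (1 - p) :> R by apply: mulr_gt0; [rewrite ltr0Sn|lra].
rewrite pmulr_rle0 //; lra.
Qed.

Lemma term_ge n k : 0 < p -> p < 1 -> (k.+1)%:R <= (n.+1)%:R * p -> bb p n k <= bb p n k.+1.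
Proof. 
move=> h0 h1 hk; have := term_sign n k h0 h1 => /= e.
have b0 := bb_ge0 n k (ltW h0) (ltW h1).
have : 0 <= (k.+1)%:R * (1 - p) * (bb p n k.+1 - bb p n k).
  rewrite e; apply: mulr_ge0 => //; lra.
have kp : 0 < (k.+1)%:R * (1 - p) :> R by apply: mulr_gt0; [rewrite ltr0Sn|lra].
rewrite pmulr_rge0 //; lra.
Qed.
End T.
Lemma chain (R : realFieldType) (g : nat -> R) a b :
  (forall n, (a <= n)%N -> (n < b)%N -> g n <= g n.+1) -> (a <= b)%N -> g a <= g b.
Proof. 
elim: b => [|b IH] H; first by rewrite leqn0 => /eqP ->.
rewrite leq_eqVlt => /orP[/eqP -> //|]; rewrite ltnS => hab.
apply: le_trans (IH _ hab) _; first by move=> n h1 h2; apply: H => //; lia.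
exact: H.
Qed.

Lemma chain_dn (R : realFieldType) (g : nat -> R) a b :
  (forall n, (a <= n)%N -> (n < b)%N -> g n.+1 <= g n) -> (a <= b)%N -> g b <= g a.
Proof. 
elim: b => [|b IH] H; first by rewrite leqn0 => /eqP ->.
rewrite leq_eqVlt => /orP[/eqP -> //|]; rewrite ltnS => hab.
apply: le_trans _ (IH _ hab); last by move=> n h1 h2; apply: H => //; lia.
exact: H.
Qed.

Lemma h_up (R : realFieldType) (m M : nat) (p : R) n : 0 < p -> p < 1 ->
  (n.+1)%:R * p <= (m.+1)%:R -> hh m M p n <= hh m M p n.+1.
Proof. 
move=> h0 h1 hn; rewrite -subr_ge0 h_step; apply: mulr_ge0; first lra.
rewrite big_nat; apply: sumr_ge0 => k /andP[hk _].
apply: mulr_ge0 => //; rewrite subr_ge0; apply: term_le => //.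
apply: le_trans hn _; by rewrite ler_nat.
Qed.

Lemma h_dn (R : realFieldType) (m M : nat) (p : R) n : 0 < p -> p < 1 ->
  (M.+1)%:R <= (n.+1)%:R * p -> hh m M p n.+1 <= hh m M p n.
Proof. 
move=> h0 h1 hn; rewrite -subr_le0 h_step; apply: mulr_ge0_le0; first lra.
rewrite big_nat; apply: sumr_le0 => k /andP[_ hk].
apply: mulr_ge0_le0 => //; rewrite subr_le0; apply: term_ge => //.
apply: le_trans _ hn; by rewrite ler_nat.
Qed.

Unset Implicit Arguments.
Theorem theorem9 (R : realFieldType) (m M : nat) (p : R) :
  (m <= M)%N -> 0 < p -> p < 1 ->
  (forall a b : nat, (a <= b)%N -> b%:R <= (m.+1)%:R / p - 1 ->
     f_Sd m M p a <= f_Sd m M p b) /\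
  (forall a b : nat, (a <= b)%N -> (M.+1)%:R / p - 1 <= a%:R ->
     f_Sd m M p b <= f_Sd m M p a).
Proof. 
move=> hmM h0 h1; have p0 : p != 0 by rewrite gt_eqF.
have c0 : 0 <= 2 / p :> R by apply: divr_ge0 => //; lra.
split=> a b hab hb; rewrite !f_h //; apply: ler_wpM2l => //.
- have hb' : b%:R + 1 <= (m.+1)%:R / p by lra.
  rewrite ler_pdivlMr // in hb'.
  apply: chain => // n _ hn; apply: h_up => //.
  have : (n.+1)%:R <= b%:R :> R by rewrite ler_nat.
  rewrite !natS'; nra.
- have hb' : (M.+1)%:R / p <= a%:R + 1 by lra.
  rewrite ler_pdivrMr // in hb'.
  apply: chain_dn => // n hn _; apply: h_dn => //.
  have : a%:R <= n%:R :> R by rewrite ler_nat.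
  rewrite !natS'; nra.
Qed.
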